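(* Let $\mathcal{A}$ be a primal algebra with universe $A$, let $<$ be a linear order on $A$, and let $\sqsubset$ denote the induced antilexicographic orders. Let $n,m$ be positive integers, $\pi$ a permutation of $\{1,\dots,n\}$ and $\sigma$ a permutation of $\{1,\dots,m\}$. A map $f:A^n\to A^m$ is a homomorphism from $\mathcal{A}^n_{\sqsubseteq_\pi}$ to $\mathcal{A}^m_{\sqsubseteq_\sigma}$ if and only if there exist $i_1,\dots,i_m\in\{1,\dots,n\}$ such that $f(x_1,\dots,x_n)=(x_{i_1},\dots,x_{i_m})$ for all $x_1,\dots,x_n\in A$ and the numbers $j_s=\pi^{-1}(i_{\sigma(s)})$, $s\in\{1,\dots,m\}$, satisfy: (i) $j_m=n$; and (ii) for every $s<m$, if $j_s=k<n$ then $\{k+1,\dots,n\}\subseteq\{j_{s+1},\dots,j_m\}$.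
   Context: A primal algebra is a finite algebra with at least two elements in which every finitary operation on its universe is a term operation. For a linear order $<$ on $A$ and a positive integer $n$, the antilexicographic order $\sqsubset$ on $A^n$ is: $(x_1,\dots,x_n)\sqsubset(y_1,\dots,y_n)$ iff there is $s$ with $x_t=y_t$ for all $t>s$ and $x_s<y_s$. For a permutation $\pi$ of $\{1,\dots,n\}$, $(x_1,\dots,x_n)\sqsubset_\pi(y_1,\dots,y_n)$ iff $(x_{\pi(1)},\dots,x_{\pi(n)})\sqsubset(y_{\pi(1)},\dots,y_{\pi(n)})$; $\sqsubseteq$ and $\sqsubseteq_\pi$ are the reflexive versions. $\mathcal{A}^n_{\sqsubseteq_\pi}$ is the direct power algebra $\mathcal{A}^n$ expanded by the relation $\sqsubseteq_\pi$. A homomorphism from $\mathcal{A}^n_{\sqsubseteq_\pi}$ to $\mathcal{A}^m_{\sqsubseteq_\sigma}$ is a map $A^n\to A^m$ that is an algebra homomorphism $\mathcal{A}^n\to\mathcal{A}^m$ and satisfies $\bar x\sqsubseteq_\pi\bar y\Rightarrow f(\bar x)\sqsubseteq_\sigma f(\bar y)$. *)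

(* Defs.v *)
From mathcomp Require Import all_boot all_fingroup.
Set Implicit Arguments. Unset Strict Implicit. Unset Printing Implicit Defensive.

Record algebra (A : finType) := Algebra {
  op_sym : Type;
  arity : op_sym -> nat;
  op : forall o : op_sym, {ffun 'I_(arity o) -> A} -> A }.

Inductive term (A : finType) (alg : algebra A) (k : nat) : Type :=
| Var of 'I_k
| App (o : op_sym alg) of ('I_(arity o) -> term alg k).

Fixpoint eval_term (A : finType) (alg : algebra A) (k : nat)
  (t : term alg k) (x : {ffun 'I_k -> A}) : A :=
  match t with
  | Var i => x i
  | App o args => op [ffun j => eval_term (args j) x]
  end.

Definition is_term_op (A : finType) (alg : algebra A) (k : nat)
  (g : {ffun 'I_k -> A} -> A) : Prop :=
  exists t : term alg k, forall x, g x = eval_term t x.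

Definition primal (A : finType) (alg : algebra A) : Prop :=
  1 < #|A| /\ forall (k : nat) (g : {ffun 'I_k -> A} -> A), is_term_op alg g.

Definition strict_linear_order (A : finType) (lt : rel A) : Prop :=
  irreflexive lt /\ transitive lt /\ forall x y, x != y -> lt x y || lt y x.

Definition antilex (A : finType) (lt : rel A) (n : nat)
  (x y : {ffun 'I_n -> A}) : Prop :=
  exists s : 'I_n, (forall t : 'I_n, s < t -> x t = y t) /\ lt (x s) (y s).

Definition antilex_le_perm (A : finType) (lt : rel A) (n : nat) (pi : 'S_n)
  (x y : {ffun 'I_n -> A}) : Prop :=
  x = y \/ antilex lt [ffun t => x (pi t)] [ffun t => y (pi t)].

Definition power_hom (A : finType) (alg : algebra A) (n m : nat)
  (f : {ffun 'I_n -> A} -> {ffun 'I_m -> A}) : Prop :=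
  forall (o : op_sym alg) (args : 'I_(arity o) -> {ffun 'I_n -> A}),
    f [ffun t => op [ffun j => args j t]] =
    [ffun s => op [ffun j => f (args j) s]].

Definition ordered_power_hom (A : finType) (alg : algebra A) (lt : rel A)
  (n m : nat) (pi : 'S_n) (sigma : 'S_m)
  (f : {ffun 'I_n -> A} -> {ffun 'I_m -> A}) : Prop :=
  power_hom alg f /\
  forall x y, antilex_le_perm lt pi x y -> antilex_le_perm lt sigma (f x) (f y).

(* Main.v *)
Require Import Defs.
From mathcomp Require Import all_boot all_fingroup zify.

Lemma term_comm (A : finType) (alg : algebra A) (n m : nat)
  (f : {ffun 'I_n -> A} -> {ffun 'I_m -> A}) (Hf : power_hom alg f) k
  (t : term alg k) (args : 'I_k -> {ffun 'I_n -> A}) :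
  f [ffun r => eval_term t [ffun j => args j r]] =
  [ffun s => eval_term t [ffun j => f (args j) s]].
Proof.
elim: t args => [i|o a IH] args /=.
  have -> : [ffun r => [ffun j => args j r] i] = args i.
    by apply/ffunP => r; rewrite !ffunE.
  by apply/ffunP => s; rewrite !ffunE.
pose args' := fun j' => [ffun r => eval_term (a j') [ffun j => args j r]].
have -> : [ffun r => op [ffun j' => eval_term (a j') [ffun j => args j r]]]
        = [ffun r => op [ffun j' => args' j' r]].
  by apply/ffunP => r; rewrite !ffunE; congr op; apply/ffunP => j'; rewrite !ffunE.
rewrite Hf; apply/ffunP => s; rewrite !ffunE; congr op; apply/ffunP => j'.
by rewrite !ffunE /args' IH ffunE.
Qed.

Lemma hom_proj (A : finType) (alg : algebra A) (n m : nat)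
  (Hprimal : primal alg)
  (f : {ffun 'I_n -> A} -> {ffun 'I_m -> A}) (Hf : power_hom alg f) :
  exists i : 'I_m -> 'I_n, forall x, f x = [ffun s => x (i s)].
Proof.
case: Hprimal => Hcard Hterm.
have comm : forall k (g : {ffun 'I_k -> A} -> A) (args : 'I_k -> {ffun 'I_n -> A}) s,
    f [ffun r => g [ffun j => args j r]] s = g [ffun j => f (args j) s].
  move=> k g args s; have [t Ht] := Hterm k g.
  have -> : [ffun r => g [ffun j => args j r]] = [ffun r => eval_term t [ffun j => args j r]].
    by apply/ffunP => r; rewrite !ffunE Ht.
  by rewrite term_comm // ffunE Ht.
have [a [b [_ _ ab]]] := card_gt1P Hcard.
suff H : forall s, exists r : 'I_n, forall x, f x s = x r.
  have [i Hi] := fin_all_exists H.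
  by exists i => x; apply/ffunP => s; rewrite ffunE Hi.
move=> s.
pose T := {ffun 'I_n -> A}.
pose args := fun j : 'I_#|T| => (enum_val j : T).
pose F := [ffun j => f (args j) s].
pose row := fun r : 'I_n => [ffun j => args j r].
have [r /eqP Hr|Hno] := pickP (fun r => F == row r).
  exists r => x; move/ffunP: Hr.
  move=> /(_ (enum_rank x)).
  by rewrite /F /row !ffunE /args enum_rankK.
exfalso.
have c1 := comm _ (fun z => if z == F then b else a) args s.
have c2 := comm _ (fun _ => a) args s.
move: c1; rewrite -/F eqxx.
have -> : [ffun r => (if [ffun j => args j r] == F then b else a)] = [ffun r => a].
  apply/ffunP => r; rewrite !ffunE; case: eqP => // E.
  by have := Hno r; rewrite /row -E eqxx.
by rewrite c2 => E; move: ab; rewrite E eqxx.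
Qed.

Lemma core (A : finType) (lt : rel A) (Hlt : strict_linear_order lt) (a b : A)
  (hab : lt a b) (n m : nat) (Hn : 0 < n) (Hm : 0 < m) (j : 'I_m -> 'I_n) :
  (forall x y : {ffun 'I_n -> A}, antilex lt x y ->
     [ffun s => x (j s)] = [ffun s => y (j s)] \/
     antilex lt [ffun s => x (j s)] [ffun s => y (j s)]) <->
  ((forall s : 'I_m, val s = m.-1 -> val (j s) = n.-1) /\
   (forall s : 'I_m, val s < m.-1 -> val (j s) < n.-1 ->
       forall k : 'I_n, val (j s) < val k ->
         exists t : 'I_m, val s < val t /\ j t = k)).
Proof.
case: Hlt => Hirr [Htr _].
have Nba : ~ lt b a by move=> hba; have := Htr _ _ _ hab hba; rewrite Hirr.
have Naa : ~ lt a a by rewrite Hirr.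
have nab : a != b by apply/eqP => E; move: hab; rewrite E Hirr.
split.
- move=> H.
  have gen : forall (q k : 'I_n) (s : 'I_m), j s = q -> q != k ->
      (forall t : 'I_n, val k < val t -> val t != val q) ->
      (forall s' : 'I_m, j s' = k -> val s' < val s) -> False.
    move=> q k s Hsq Hqk Hkt Hs'.
    pose x := [ffun u => if u == q then b else a].
    pose y := [ffun u => if u == q then a else if u == k then b else a].
    have Hxy : antilex lt x y.
      exists k; split; last by rewrite !ffunE eq_sym (negbTE Hqk) eqxx.
      move=> t Ht; rewrite !ffunE.
      have -> : (t == q) = false by apply/negbTE; apply: contra (Hkt t Ht) => /eqP ->.
      have -> : (t == k) = false by apply/negbTE; apply: contraTneq Ht => ->; rewrite ltnn.
      by [].
    case: (H x y Hxy).
      move/ffunP/(_ s); rewrite !ffunE Hsq eqxx => E.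
      by move: nab; rewrite E eqxx.
    case=> s' [Ht Hl]; move: Hl; rewrite !ffunE.
    case: eqP => [_|_] //; case: eqP => [Hk|_] //.
    have := Ht s (Hs' s' Hk); rewrite !ffunE Hsq eqxx => E.
    by move: nab; rewrite E eqxx.
  split.
  + move=> s Hs; case: (eqVneq (val (j s)) n.-1) => // Hq; exfalso.
    have hN : n.-1 < n by rewrite ltn_predL.
    pose N : 'I_n := Ordinal hN.
    apply: (gen (j s) N s erefl).
    * by apply: contra Hq => /eqP ->.
    * move=> t Ht; exfalso; move: Ht; rewrite /=.
      have := ltn_ord t; lia.
    * move=> s' Hs'; have := ltn_ord s'.
      have : val s' != val s.
        apply/negP => /eqP/val_inj E; subst s'.
        by move: Hq; rewrite Hs' /= eqxx.
      move: Hs; rewrite /=; lia.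
  + move=> s Hs Hq k Hk.
    case: (pickP (fun t : 'I_m => (val s < val t) && (j t == k))) => [t /andP[h1 /eqP h2]|Hno].
      by exists t.
    exfalso; apply: (gen (j s) k s erefl).
    * by apply/negP => /eqP E; move: Hk; rewrite E ltnn.
    * by move=> t Ht; move: Hk Ht; rewrite /=; lia.
    * move=> s' Hs'; have := Hno s'; rewrite Hs' eqxx andbT => /negbT; rewrite -leqNgt.
      have : val s' != val s.
        apply/negP => /eqP/val_inj E; subst s'.
        by move: Hk; rewrite Hs' ltnn.
      lia.
- case=> Hi Hii x y [p [Hp Hl]].
  have Hpne : x p != y p by apply/negP => /eqP E; move: Hl; rewrite E Hirr.
  case: (pickP (fun s => x (j s) != y (j s))) => [s0 Hs0|Hno]; last first.
    left; apply/ffunP => s; rewrite !ffunE; have := Hno s; by move/negbFE/eqP.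
  right; case: (@arg_maxnP _ s0 (fun s => x (j s) != y (j s)) (fun s : 'I_m => val s) Hs0) => s1 Hs1 Hmax.
  have Hle : val (j s1) <= val p.
    rewrite leqNgt; apply/negP => H1; move: Hs1; by rewrite Hp // eqxx.
  have Heq : j s1 = p.
    move: Hle; rewrite leq_eqVlt => /orP[/eqP/val_inj //|Hlt1].
    exfalso.
    case: (ltnP (val s1) m.-1) => h.
      have hq : val (j s1) < n.-1.
        by move: Hlt1 (ltn_ord p); rewrite /=; lia.
      have [t [h1 h2]] := Hii s1 h hq p Hlt1.
      have := Hmax t; rewrite h2 => /(_ Hpne); move: h1; rewrite /=; lia.
    have hs : val s1 = m.-1 by move: h (ltn_ord s1); rewrite /=; lia.
    move: (Hi s1 hs) Hlt1 (ltn_ord p); rewrite /=; lia.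
  exists s1; split; last by rewrite !ffunE Heq.
  move=> t Ht; rewrite !ffunE; apply/eqP; apply/negPn/negP => Hne.
  by move: (Hmax t Hne) Ht; rewrite /=; lia.
Qed.

(* Indices are 0-based: {1..n} is 'I_n, so "n" becomes n-1 and "m" becomes m-1. *)
Theorem lemma4p1 (A : finType) (alg : algebra A) (lt : rel A)
  (Hprimal : primal alg) (Hlt : strict_linear_order lt)
  (n m : nat) (Hn : 0 < n) (Hm : 0 < m) (pi : 'S_n) (sigma : 'S_m)
  (f : {ffun 'I_n -> A} -> {ffun 'I_m -> A}) :
  ordered_power_hom alg lt pi sigma f <->
  exists i : 'I_m -> 'I_n,
    (forall x, f x = [ffun s => x (i s)]) /\
    let j := fun s : 'I_m => (pi^-1)%g (i (sigma s)) in
    (forall s : 'I_m, val s = m.-1 -> val (j s) = n.-1) /\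
    (forall s : 'I_m, val s < m.-1 -> val (j s) < n.-1 ->
       forall k : 'I_n, val (j s) < val k ->
         exists t : 'I_m, val s < val t /\ j t = k).
Proof.
have [a [b hab]] : exists a b, lt a b.
  have [a0 [b0 [_ _ ab0]]] := card_gt1P (proj1 Hprimal).
  case/orP: (proj2 (proj2 Hlt) a0 b0 ab0) => h; first by exists a0, b0.
  by exists b0, a0.
split.
- case=> Hf Hord; have [i Hi] := hom_proj _ _ _ _ Hprimal f Hf.
  exists i; split => //.
  apply: (proj1 (core _ _ Hlt _ _ hab _ _ Hn Hm (fun s => (pi^-1)%g (i (sigma s))))).
  move=> x' y' Hxy.
  pose x := [ffun u => x' ((pi^-1)%g u)].
  pose y := [ffun u => y' ((pi^-1)%g u)].
  have ex : [ffun t => x (pi t)] = x' by apply/ffunP => t; rewrite !ffunE permK.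
  have ey : [ffun t => y (pi t)] = y' by apply/ffunP => t; rewrite !ffunE permK.
  have := Hord x y; rewrite /antilex_le_perm ex ey => /(_ (or_intror Hxy)).
  case=> [E|H].
    left; rewrite !Hi in E; apply/ffunP => s; move/ffunP/(_ (sigma s)): E.
    by rewrite !ffunE.
  right; move: H.
  have -> : [ffun t => f x (sigma t)] = [ffun s => x' ((pi^-1)%g (i (sigma s)))].
    by apply/ffunP => t; rewrite Hi !ffunE.
  have -> : [ffun t => f y (sigma t)] = [ffun s => y' ((pi^-1)%g (i (sigma s)))].
    by apply/ffunP => t; rewrite Hi !ffunE.
  by [].
- case=> i [Hi Hj]; split.
    move=> o args; rewrite !Hi; apply/ffunP => s; rewrite !ffunE; congr op.
    by apply/ffunP => k; rewrite !ffunE Hi ffunE.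
  move=> x y [->|Hxy]; first by left.
  have Hc := proj2 (core _ _ Hlt _ _ hab _ _ Hn Hm (fun s => (pi^-1)%g (i (sigma s)))) Hj _ _ Hxy.
  case: Hc => [E|H].
    left; rewrite !Hi; apply/ffunP => s; rewrite !ffunE.
    move/ffunP/(_ ((sigma^-1)%g s)): E; rewrite !ffunE !permKV.
    by [].
  right; move: H.
  have -> : [ffun s => [ffun t => x (pi t)] ((pi^-1)%g (i (sigma s)))]
          = [ffun t => f x (sigma t)].
    by apply/ffunP => t; rewrite Hi !ffunE permKV.
  have -> : [ffun s => [ffun t => y (pi t)] ((pi^-1)%g (i (sigma s)))]
          = [ffun t => f y (sigma t)].
    by apply/ffunP => t; rewrite Hi !ffunE permKV.
  by [].
Qed.
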